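(* Let $n\ge2$ and let $T=(n;\sigma,\delta,\sigma)$ with $\sigma,\delta\in\mathbb{R}$, $\sigma\ne0$. Then the eigenvalues $\lambda_h=\delta+2\sigma\cos\frac{h\pi}{n+1}$ have $\mathcal S_{\mathcal T}$-structured condition numbers \[ \kappa_{\mathcal S_{\mathcal T}}(\lambda_h)=\sqrt{\frac1n+\frac2{n-1}\cos^2\frac{h\pi}{n+1}},\qquad h=1,\dots,n. \]
   Context: $(n;\sigma,\delta,\tau)$ is the $n\times n$ tridiagonal Toeplitz matrix with diagonal $\delta$, superdiagonal $\tau$, subdiagonal $\sigma$. For $T=(n;\sigma,\delta,\sigma)$ real, the unit vector $\widetilde x_h$ proportional to $(\sin\frac{hk\pi}{n+1})_{k=1}^n$ is a right and left eigenvector for $\lambda_h$, $\kappa(\lambda_h)=1$, and $W_h=\widetilde x_h\widetilde x_h^H$. $\mathcal S_{\mathcal T}$ denotes the real subspace of real symmetric $n\times n$ tridiagonal Toeplitz matrices; $W_h|_{\mathcal S_{\mathcal T}}$ is the orthogonal projection of $W_h$ onto $\mathcal S_{\mathcal T}$ with respect to the (real) Frobenius inner product $\mathrm{Re}\,\mathrm{tr}(A^HB)$, and $\kappa_{\mathcal S_{\mathcal T}}(\lambda_h)=\kappa(\lambda_h)\|W_h|_{\mathcal S_{\mathcal T}}\|_F$. *)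

(* Defs.v *)
From mathcomp Require Import all_boot all_order all_algebra.
From mathcomp Require Import all_classical all_reals all_analysis.
Set Implicit Arguments. Unset Strict Implicit. Unset Printing Implicit Defensive.
Import Order.TTheory GRing.Theory Num.Theory.
Local Open Scope ring_scope.

Definition tridiag {R : realType} (n : nat) (sigma delta tau : R) : 'M[R]_n :=
  \matrix_(i < n, j < n)
    if i == j :> nat then delta
    else if j == i.+1 :> nat then tau
    else if i == j.+1 :> nat then sigma
    else 0.

(* real Frobenius inner product Re tr(A^H B) for real matrices, and its norm *)
Definition frob_inner {R : realType} (n : nat) (A B : 'M[R]_n) : R :=
  \sum_(i < n) \sum_(j < n) A i j * B i j.
Definition frob_norm {R : realType} (n : nat) (A : 'M[R]_n) : R :=
  Num.sqrt (frob_inner A A).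

Definition in_ST {R : realType} (n : nat) (A : 'M[R]_n) : Prop :=
  exists sigma delta : R, A = tridiag n sigma delta sigma.

Definition is_proj_ST {R : realType} (n : nat) (W P : 'M[R]_n) : Prop :=
  in_ST P /\ forall A, in_ST A -> frob_inner (W - P) A = 0.

Definition vdot {R : realType} (n : nat) (x y : 'cV[R]_n) : R :=
  \sum_(k < n) x k ord0 * y k ord0.
Definition vnorm {R : realType} (n : nat) (x : 'cV[R]_n) : R :=
  Num.sqrt (vdot x x).

Definition lambda_h {R : realType} (n h : nat) (sigma delta : R) : R :=
  delta + 2 * sigma * cos (h%:R * pi / (n.+1)%:R).

Definition xsin {R : realType} (n h : nat) : 'cV[R]_n :=
  \col_(k < n) sin (h%:R * (k.+1)%:R * pi / (n.+1)%:R).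
Definition xtilde {R : realType} (n h : nat) : 'cV[R]_n :=
  (vnorm (xsin n h))^-1 *: xsin n h.

(* condition number of a simple eigenvalue with right eigenvector x and
   left eigenvector y: ||x|| ||y|| / |y^H x|; here x = y = xtilde *)
Definition kappa_eig {R : realType} (n : nat) (x y : 'cV[R]_n) : R :=
  vnorm x * vnorm y / `|vdot y x|.
Definition kappa_h {R : realType} (n h : nat) : R :=
  kappa_eig (xtilde n h) (xtilde n h).

Definition W_h {R : realType} (n h : nat) : 'M[R]_n :=
  xtilde n h *m (xtilde n h)^T.

(* Main.v *)
Require Import Defs.
From mathcomp Require Import all_boot all_order all_algebra.
From mathcomp Require Import all_classical all_reals all_analysis.
From mathcomp Require Import zify lra ring.
Import Order.TTheory GRing.Theory Num.Theory.
Local Open Scope ring_scope.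

Lemma sum_ind (R : realType) (F : nat -> R) k N :
  \sum_(0 <= b < N) F b * (b == k)%:R = if (k < N)%N then F k else 0.
Proof.
elim: N => [|N IH]; first by rewrite big_geq.
rewrite big_nat_recr //= IH.
have [lt|gt|eq] := ltngtP k N.
- have -> : (k < N.+1)%N by lia.
  by rewrite mulr0 addr0.
- have -> : (k < N.+1)%N = false by lia.
  by rewrite mulr0 addr0.
- by rewrite ?eq ?ltnn ?ltnSn ?mulr1 ?add0r.
Qed.

Lemma sum_shift (R : realType) (F : nat -> R) m :
  \sum_(0 <= a < m.+1) (if (a.+1 < m.+1)%N then F a else 0) = \sum_(0 <= a < m) F a.
Proof.
rewrite big_nat_recr //= ltnn addr0; apply: eq_big_nat => a /andP[_ Ha].
by rewrite ltnS Ha.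
Qed.

Definition tt {R : realType} (s d t : R) (a b : nat) : R :=
  if a == b then d else if b == a.+1 then t else if a == b.+1 then s else 0.

Lemma tt_split (R : realType) (s d t : R) a b :
  tt s d t a b = d * (b == a)%:R + t * (b == a.+1)%:R + s * (a == b.+1)%:R.
Proof.
rewrite /tt; case E1: (a == b); case E2: (b == a.+1); case E3: (a == b.+1);
  rewrite /= ?mulr1 ?mulr0 ?addr0 ?add0r //; try lia.
all: try (have -> : (b == a) = true by lia); try (have -> : (b == a) = false by lia);
  rewrite ?mulr1 ?mulr0 ?addr0 ?add0r //.
Qed.

Lemma sum_tt (R : realType) (f : nat -> nat -> R) (s d t : R) m :
  \sum_(0 <= a < m.+1) \sum_(0 <= b < m.+1) f a b * tt s d t a b =
  d * \sum_(0 <= a < m.+1) f a a + t * \sum_(0 <= a < m) f a a.+1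
  + s * \sum_(0 <= a < m) f a.+1 a.
Proof.
under eq_bigr => a _ do under eq_bigr => b _ do
  rewrite tt_split !mulrDr ![f a b * (_ * _)]mulrCA.
under eq_bigr => a _ do rewrite !big_split /= -!mulr_sumr.
rewrite !big_split /= -!mulr_sumr.
congr (_ * _ + _ * _ + _ * _).
- apply: eq_big_nat => a /andP[_ Ha].
  by rewrite (@sum_ind _ (f a)) Ha.
- rewrite -[RHS]sum_shift; apply: eq_big_nat => a /andP[_ Ha].
  by rewrite (@sum_ind _ (f a)).
- rewrite exchange_big_nat -[RHS]sum_shift; apply: eq_big_nat => a /andP[_ Ha].
  by rewrite (@sum_ind _ (f^~ a)).
Qed.

Lemma sin_rec (R : realType) (x : R) k :
  sin ((k.+2)%:R * x) + sin (k%:R * x) = 2 * cos x * sin ((k.+1)%:R * x).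
Proof.
have -> : (k.+2)%:R * x = (k.+1)%:R * x + x by rewrite -addn1 natrD mulrDl mul1r.
have -> : k%:R * x = (k.+1)%:R * x - x by rewrite -addn1 natrD mulrDl mul1r addrK.
rewrite sinD sinB; ring.
Qed.

Lemma sin_natpi (R : realType) h : sin (h%:R * pi) = 0 :> R.
Proof.
elim: h => [|h IH]; first by rewrite mul0r sin0.
by rewrite -addn1 natrD mulrDl mul1r sinDpi IH oppr0.
Qed.

Lemma trig_sum (R : realType) (x : R) N :
  sin ((N.+2)%:R * x) = 0 ->
  \sum_(0 <= k < N) sin ((k.+1)%:R * x) * sin ((k.+2)%:R * x) =
  cos x * \sum_(0 <= k < N.+1) sin ((k.+1)%:R * x) * sin ((k.+1)%:R * x).
Proof.
move=> Hend.
have key : 2 * cos x * \sum_(0 <= k < N.+1) sin ((k.+1)%:R * x) * sin ((k.+1)%:R * x)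
  = \sum_(0 <= k < N.+1) sin ((k.+1)%:R * x) * sin ((k.+2)%:R * x)
  + \sum_(0 <= k < N.+1) sin ((k.+1)%:R * x) * sin (k%:R * x).
  rewrite -big_split mulr_sumr; apply: eq_bigr => k _ /=.
  rewrite -mulrDr sin_rec; ring.
move: key; rewrite [X in _ = X + _]big_nat_recr //= Hend mulr0 addr0.
rewrite [X in _ = _ + X]big_nat_recl //= mul0r sin0 mulr0 add0r.
under [X in _ = _ + X -> _]eq_bigr => k _ do rewrite mulrC.
move=> key.
set S1 := \sum_(0 <= k < N) _.
set S := \sum_(0 <= k < N.+1) _.
rewrite -/S1 in key.
rewrite -/S -mulrA in key. set P := cos x * S in key *. lra.
Qed.

Lemma ord_sum (R : realType) k (F : 'I_k.+1 -> R) :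
  \sum_(i < k.+1) F i = \sum_(0 <= i < k.+1) F (inord i).
Proof. by rewrite big_mkord; apply: eq_bigr => i _; rewrite inord_val. Qed.

Lemma tridiag_inord (R : realType) N (s d t : R) a b :
  (a < N.+1)%N -> (b < N.+1)%N ->
  tridiag N.+1 s d t (inord a) (inord b) = tt s d t a b.
Proof. by move=> Ha Hb; rewrite mxE !inordK. Qed.

Lemma frob_tri (R : realType) N (M : 'M[R]_N.+1) (s d t : R) :
  frob_inner M (tridiag N.+1 s d t) =
  d * \sum_(0 <= a < N.+1) M (inord a) (inord a)
  + t * \sum_(0 <= a < N) M (inord a) (inord a.+1)
  + s * \sum_(0 <= a < N) M (inord a.+1) (inord a).
Proof.
rewrite /frob_inner ord_sum.
under eq_bigr => a _ do rewrite ord_sum.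
have E := @sum_tt _ (fun a b => M (inord a) (inord b)) s d t N.
simpl in E; rewrite -E.
apply: eq_big_nat => a /andP[_ Ha]; apply: eq_big_nat => b /andP[_ Hb].
by rewrite tridiag_inord.
Qed.

Lemma tt_diag (R : realType) (s d t : R) a : tt s d t a a = d.
Proof. by rewrite /tt eqxx. Qed.
Lemma tt_up (R : realType) (s d t : R) a : tt s d t a a.+1 = t.
Proof. have H : (a == a.+1) = false by lia.
by rewrite /tt H eqxx. Qed.
Lemma tt_low (R : realType) (s d t : R) a : tt s d t a.+1 a = s.
Proof.
have H1 : (a.+1 == a) = false by lia.
have H2 : (a == a.+2) = false by lia.
by rewrite /tt H1 H2 eqxx.
Qed.
Theorem proposition14 (R : realType) (n : nat) (sigma delta : R) :
  (2 <= n)%N -> sigma != 0 ->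
  forall h : nat, (1 <= h <= n)%N ->
    (exists P : 'M[R]_n, is_proj_ST (W_h n h) P) /\
    (forall P : 'M[R]_n, is_proj_ST (W_h n h) P ->
      kappa_h n h * frob_norm P =
      Num.sqrt (1 / n%:R + 2 / (n.-1)%:R * cos (h%:R * pi / (n.+1)%:R) ^+ 2)).
Proof.
move=> Hn _ h /andP[Hh1 Hhn].
case: n Hn Hhn => [|N] // Hn Hhn.
rewrite [N.+1.-1]/=.
set th := h%:R * pi / (N.+2)%:R.
pose u k : R := xtilde N.+1 h (inord k) ord0.
pose v k := sin ((k.+1)%:R * th).
pose S := \sum_(0 <= k < N.+1) v k * v k.
have HN2 : (N.+2)%:R != 0 :> R by rewrite pnatr_eq0.
have HN1 : (N.+1)%:R != 0 :> R by rewrite pnatr_eq0.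
have HN : N%:R != 0 :> R by rewrite pnatr_eq0; lia.
have HN1' : 1 + N%:R != 0 :> R by rewrite addrC natr1.
have Hxs : forall k, (k < N.+1)%N -> xsin N.+1 h (inord k) ord0 = v k.
  move=> k Hk; rewrite mxE inordK // /v /th; congr sin.
  field; done.
have HS : vdot (xsin N.+1 h) (xsin N.+1 h) = S.
  rewrite /vdot ord_sum; apply: eq_big_nat => k /andP[_ Hk]; by rewrite Hxs.
have Hth : 0 < th < pi.
  apply/andP; split.
    by rewrite /th divr_gt0 // ?mulr_gt0 ?pi_gt0 // ltr0n; lia.
  rewrite /th ltr_pdivrMr ?ltr0n // mulrC ltr_pM2l ?pi_gt0 // ltr_nat; lia.
have HS0 : 0 < S.
  rewrite /S big_nat_recl //.
  have h1 : 0 < v 0%N * v 0%N by rewrite /v mul1r mulr_gt0 // sin_gt0_pi.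
  have h2 : 0 <= \sum_(0 <= i < N) v i.+1 * v i.+1.
    by apply: sumr_ge0 => i _; rewrite -expr2 sqr_ge0.
  lra.
pose c : R := (vnorm (xsin N.+1 h))^-1.
have Hu : forall k, (k < N.+1)%N -> u k = c * v k.
  by move=> k Hk; rewrite /u /xtilde mxE Hxs.
have Hc : c * c * S = 1.
  rewrite /c /vnorm HS.
  have Hq := sqr_sqrtr (ltW HS0).
  have Hq0 : Num.sqrt S != 0 by rewrite gt_eqF // sqrtr_gt0.
  move: Hq Hq0; set q := Num.sqrt S => Hq Hq0.
  rewrite -Hq; field; done.
have U1 : \sum_(0 <= k < N.+1) u k * u k = 1.
  rewrite -Hc /S mulr_sumr; apply: eq_big_nat => k /andP[_ Hk].
  rewrite Hu //; ring.
have Hend : sin ((N.+2)%:R * th) = 0.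
  have -> : (N.+2)%:R * th = h%:R * pi by rewrite /th; field.
  exact: sin_natpi.
have C1 : \sum_(0 <= k < N) u k * u k.+1 = cos th.
  have T := @trig_sum _ th N Hend.
  rewrite -[RHS]mul1r -Hc -mulrA (mulrC S) /S /v -T mulr_sumr; apply: eq_big_nat => k /andP[_ Hk].
  rewrite !Hu //; last by lia.
  rewrite /v; ring.
have Wij : forall a b, W_h N.+1 h (inord a) (inord b) = u a * u b.
  by move=> a b; rewrite /W_h /u !mxE big_ord1 !mxE.
have D1 : forall s d t : R, \sum_(0 <= a < N.+1)
    (W_h N.+1 h - tridiag N.+1 s d t) (inord a) (inord a) = 1 - d *+ N.+1.
  move=> s d t.
  rewrite (@eq_big_nat _ _ _ 0 N.+1 _ (fun a => u a * u a - d)); last first.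
    move=> a /andP[_ Ha].
    by rewrite mxE Wij mxE tridiag_inord // tt_diag.
  by rewrite sumrB U1 sumr_const_nat subn0.
have D2 : forall s d t : R, \sum_(0 <= a < N)
    (W_h N.+1 h - tridiag N.+1 s d t) (inord a) (inord a.+1) = cos th - t *+ N.
  move=> s d t.
  rewrite (@eq_big_nat _ _ _ 0 N _ (fun a => u a * u a.+1 - t)); last first.
    move=> a /andP[_ Ha].
    by rewrite mxE Wij mxE tridiag_inord ?tt_up //; lia.
  by rewrite sumrB C1 sumr_const_nat subn0.
have D3 : forall s d t : R, \sum_(0 <= a < N)
    (W_h N.+1 h - tridiag N.+1 s d t) (inord a.+1) (inord a) = cos th - s *+ N.
  move=> s d t.
  rewrite (@eq_big_nat _ _ _ 0 N _ (fun a => u a * u a.+1 - s)); last first.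
    move=> a /andP[_ Ha].
    by rewrite mxE Wij mxE tridiag_inord ?tt_low 1?mulrC //; lia.
  by rewrite sumrB C1 sumr_const_nat subn0.
have Hv : vdot (xtilde N.+1 h : 'cV[R]_N.+1) (xtilde N.+1 h) = 1.
  by rewrite /vdot ord_sum.
have Hk : kappa_h N.+1 h = 1 :> R.
  by rewrite /kappa_h /kappa_eig /vnorm Hv sqrtr1 normr1 mulr1 invr1 mulr1.
split.
  exists (tridiag N.+1 (cos th / N%:R) (1 / (N.+1)%:R) (cos th / N%:R)).
  split.
    by exists (cos th / N%:R); exists (1 / (N.+1)%:R).
  move=> A [s' [d' ->]].
  rewrite frob_tri D1 D2 D3 -[1 / _ *+ _]mulr_natr -[cos th / _ *+ _]mulr_natr.
  by field; rewrite HN HN1'.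
move=> P [[s [d ->]] Horth].
have O1 : frob_inner (W_h N.+1 h - tridiag N.+1 s d s) (tridiag N.+1 0 1 0) = 0.
  by apply: Horth; exists 0; exists 1.
have O2 : frob_inner (W_h N.+1 h - tridiag N.+1 s d s) (tridiag N.+1 1 0 1) = 0.
  by apply: Horth; exists 1; exists 0.
rewrite frob_tri D1 D2 D3 in O1.
rewrite frob_tri D1 D2 D3 in O2.
rewrite -[d *+ _]mulr_natr -[s *+ _]mulr_natr !mul0r !mul1r ?addr0 ?add0r in O1 O2.
have Ed : d * (N.+1)%:R = 1 by lra.
have Es : s * N%:R = cos th by lra.
have -> : d = 1 / (N.+1)%:R by rewrite -[LHS](mulfK HN1) Ed.
have -> : s = cos th / N%:R by rewrite -[LHS](mulfK HN) Es.
rewrite Hk mul1r /frob_norm frob_tri.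
congr Num.sqrt.
rewrite (@eq_big_nat _ _ _ 0 N.+1 _ (fun=> 1 / (N.+1)%:R)); last first.
  by move=> a /andP[_ Ha]; rewrite tridiag_inord // tt_diag.
rewrite (@eq_big_nat _ _ _ 0 N _ (fun=> cos th / N%:R)); last first.
  by move=> a /andP[_ Ha]; rewrite tridiag_inord ?tt_up //; lia.
rewrite [X in _ + _ * X = _](@eq_big_nat _ _ _ 0 N _ (fun=> cos th / N%:R)); last first.
  by move=> a /andP[_ Ha]; rewrite tridiag_inord ?tt_low //; lia.
rewrite !sumr_const_nat !subn0 -[1 / _ *+ _]mulr_natr -[cos th / _ *+ _]mulr_natr.
by field; rewrite HN HN1'.
Qed.
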